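(* Let $k\ge1$. On $[0,1)$ the function $T_{k,1}$ is nonincreasing and the function $T_{k,k}$ is nondecreasing.
   Context: For an integer $k\ge1$, $f_k:[0,1]\to[0,1]$ denotes the unique decreasing function satisfying $f_k(x)^k-f_k(x)^{k+1}=x^k-x^{k+1}$ for all $x\in[0,1]$; it is continuous with $f_k(0)=1$, $f_k(1)=0$. For $1\le j\le k$ and $y\in[0,1)$ define $T_{k,j}(y):=\dfrac{(1-y)\,y^{j-1}}{f_k(y)^j}$. *)

(* Defs.v *)
From Stdlib Require Import Reals Lra Lia.
Open Scope R_scope.

(* Such f exists and is unique, so quantifying over all such f is faithful. *)
Definition is_fk (k : nat) (f : R -> R) : Prop :=
  (forall x, 0 <= x <= 1 -> 0 <= f x <= 1) /\
  (forall x y, 0 <= x -> x < y -> y <= 1 -> f y < f x) /\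
  (forall x, 0 <= x <= 1 -> f x ^ k - f x ^ (k + 1) = x ^ k - x ^ (k + 1)).

Definition T (f : R -> R) (j : nat) (y : R) : R :=
  (1 - y) * y ^ (j - 1) / f y ^ j.

(* Main.v *)
Require Import Defs.
From Stdlib Require Import Reals Lra Lia Psatz.
Open Scope R_scope.

Lemma Rdiv_le_0_compat a b : 0 <= a -> 0 < b -> 0 <= a / b.
Proof. intros. unfold Rdiv. apply Rmult_le_pos; [lra|]. left; apply Rinv_0_lt_compat; lra. Qed.

Fixpoint G (n:nat) (a b:R) : R :=
  match n with O => 0 | S n' => b^n' + a * G n' a b end.

Lemma G_diff n a b : (b - a) * G n a b = b^n - a^n.
Proof. induction n. { simpl; ring. }
  change (G (S n) a b) with (b^n + a * G n a b).
  replace ((b - a) * (b ^ n + a * G n a b)) with ((b-a)*b^n + a*((b-a)*G n a b)) by ring.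
  rewrite IHn. simpl. ring. Qed.

Lemma G_alt n a b : G (S n) a b = a^n + b * G n a b.
Proof. induction n. { simpl; ring. }
  change (G (S (S n)) a b) with (b^(S n) + a * G (S n) a b).
  rewrite IHn at 1. simpl. ring. Qed.

Lemma G_nonneg n a b : 0 <= a -> 0 <= b -> 0 <= G n a b.
Proof. intros; induction n; simpl. lra.
  pose proof (pow_le b n H0). nra. Qed.

Lemma G_bounds m a b : 0 <= a -> a <= b ->
  INR (S m) * a^m <= G (S m) a b <= INR (S m) * b^m.
Proof. intros Ha Hab. induction m.
  simpl. lra.
  change (G (S (S m)) a b) with (b^(S m) + a * G (S m) a b).
  rewrite S_INR. destruct IHm as [H1 H2].
  assert (P1: a^(S m) <= b^(S m)) by (apply pow_incr; lra).
  assert (0 <= a^m) by (apply pow_le; lra).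
  assert (0 <= INR (S m)) by apply pos_INR.
  set (K := INR (S m)) in *. set (Gs := G (S m) a b) in *.
  change (a^(S m)) with (a * a^m) in *. change (b^(S m)) with (b * b^m) in *.
  assert (0 <= b^m) by (apply pow_le; lra).
  assert (a * (K * a^m) <= a * Gs) by (apply Rmult_le_compat_l; lra).
  assert (a * Gs <= a * (K * b^m)) by (apply Rmult_le_compat_l; lra).
  assert (a * (K * b^m) <= b * (K * b^m)) by (apply Rmult_le_compat_r; [apply Rmult_le_pos|]; lra).
  split; lra. Qed.

Lemma G_mono n a b a' b' : 0 <= a -> a <= a' -> 0 <= b -> b <= b' ->
  G n a b <= G n a' b'.
Proof. intros; induction n; simpl. lra.
  assert (b^n <= b'^n) by (apply pow_incr; lra).
  pose proof (G_nonneg n a b H H1). nra. Qed.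

Lemma G_hom n a b c : G n (c*a) (c*b) * c = c^n * G n a b.
Proof. induction n. { simpl; ring. }
  change (G (S n) (c*a) (c*b)) with ((c*b)^n + c*a * G n (c*a) (c*b)).
  change (G (S n) a b) with (b^n + a * G n a b).
  rewrite Rmult_plus_distr_r, Rpow_mult_distr.
  replace (c * a * G n (c * a) (c * b) * c) with (c*a*(G n (c * a) (c * b) * c)) by ring.
  rewrite IHn. simpl. ring. Qed.

Lemma G_ge1 m b : 0 <= b -> 1 <= G (S m) 1 b.
Proof. intros. rewrite G_alt, pow1. pose proof (G_nonneg m 1 b ltac:(lra) H). nra. Qed.

Definition h k t := t^k - t^(k+1).

Lemma h_diff k a b : h k b - h k a = (b - a) * (G k a b - G (S k) a b).
Proof. unfold h. rewrite Nat.add_1_r, Rmult_minus_distr_l, !G_diff. ring. Qed.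

Lemma h_inc m a b : 0 <= a -> a < b -> b <= INR (S m) / (INR (S m) + 1) ->
  h (S m) a < h (S m) b.
Proof. intros Ha Hab Hb.
  assert (Hk: 0 < INR (S m)) by apply lt_0_INR, Nat.lt_0_succ.
  assert (Hb1: (1 - b) * INR (S m) >= b).
  { apply Rmult_le_compat_r with (r := INR (S m) + 1) in Hb; [|lra].
    unfold Rdiv in Hb. rewrite Rmult_assoc, Rinv_l in Hb by lra. nra. }
  apply Rminus_gt_0_lt. rewrite h_diff, (G_alt (S m)).
  apply Rmult_lt_0_compat; [lra|].
  pose proof (G_bounds m a b Ha ltac:(lra)) as [B1 _].
  assert (Hbm: 0 < b^m) by (apply pow_lt; lra).
  assert (G (S m) a b >= b^m).
  { simpl. pose proof (G_nonneg m a b Ha ltac:(lra)). nra. }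
  assert (b < 1) by nra.
  set (A := G (S m) a b) in *. set (K := INR (S m)) in *.
  destruct (Req_dec a 0).
  - rewrite H1, pow_i by lia.
    assert (0 < (1-b) * A) by (apply Rmult_lt_0_compat; lra). lra.
  - assert (0 < a^m) by (apply pow_lt; lra). change (a^(S m)) with (a*a^m).
    assert ((1-b) * (K * a^m) <= (1-b) * A) by (apply Rmult_le_compat_l; lra).
    assert (a * a^m < (1-b) * K * a^m) by (apply Rmult_lt_compat_r; lra).
    lra. Qed.

Lemma h_dec m a b : INR (S m) / (INR (S m) + 1) <= a -> a < b -> b <= 1 ->
  h (S m) b < h (S m) a.
Proof. intros Ha Hab Hb.
  assert (Hk: 0 < INR (S m)) by apply lt_0_INR, Nat.lt_0_succ.
  assert (Hp: 0 < INR (S m) / (INR (S m) + 1)) by (apply Rdiv_lt_0_compat; lra).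
  assert (Ha1: (1 - a) * INR (S m) <= a).
  { apply Rmult_le_compat_r with (r := INR (S m) + 1) in Ha; [|lra].
    unfold Rdiv in Ha. rewrite Rmult_assoc, Rinv_l in Ha by lra. nra. }
  apply Rminus_gt_0_lt.
  replace (h (S m) a - h (S m) b) with (- (h (S m) b - h (S m) a)) by ring.
  rewrite h_diff. change (G (S (S m)) a b) with (b^(S m) + a * G (S m) a b).
  pose proof (G_bounds m a b ltac:(lra) ltac:(lra)) as [_ B2].
  assert (Hbm: 0 < b^m) by (apply pow_lt; lra).
  set (A := G (S m) a b) in *. set (K := INR (S m)) in *.
  change (b^(S m)) with (b*b^m).
  assert ((1-a) * A <= (1-a) * (K * b^m)) by (apply Rmult_le_compat_l; lra).
  assert ((1-a) * K * b^m < b * b^m) by (apply Rmult_lt_compat_r; lra).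
  assert (0 < b * b^m - (1-a)*A) by lra.
  replace (- ((b - a) * (A - (b * b ^ m + a * A)))) with ((b-a) * (b * b^m - (1-a)*A)) by ring.
  apply Rmult_lt_0_compat; lra. Qed.

Lemma fixed_pt k f c : (1 <= k)%nat -> is_fk k f -> 0 < c < 1 -> f c = c ->
  INR k * (1 - c) = c.
Proof. intros Hk [Hr [Hd He]] Hc Hf.
  destruct k as [|m]; [lia|].
  set (p := INR (S m) / (INR (S m) + 1)).
  assert (HkS: 0 < INR (S m)) by apply lt_0_INR, Nat.lt_0_succ.
  assert (Hp0: 0 < p) by (apply Rdiv_lt_0_compat; lra).
  assert (Hp1: p < 1) by (unfold p; apply (Rmult_lt_reg_r (INR (S m) + 1)); [lra|];
     unfold Rdiv; rewrite Rmult_assoc, Rinv_l by lra; lra).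
  assert (Hpf: h (S m) (f p) = h (S m) p) by (unfold h; apply He; lra).
  destruct (Rtotal_order c p) as [Hlt|[Heq|Hgt]].
  - assert (f p < c) by (rewrite <- Hf; apply Hd; lra).
    pose proof (Hr p ltac:(lra)).
    pose proof (h_inc m (f p) p ltac:(lra) ltac:(lra) ltac:(unfold p; lra)). lra.
  - rewrite Heq. unfold p. field. lra.
  - assert (c < f p) by (rewrite <- Hf; apply Hd; lra).
    pose proof (Hr p ltac:(lra)).
    pose proof (h_dec m p (f p) ltac:(unfold p; lra) ltac:(lra) ltac:(lra)). lra.
Qed.

Lemma key m f y : is_fk (S m) f -> 0 < y < 1 ->
  0 < f y /\ (1 - y) * G (S m) (f y) y = f y ^ (S m).
Proof. intros Hf Hy. pose proof Hf as [Hr [Hd He]].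
  assert (Hpos: 0 < f y) by (pose proof (Hr 1 ltac:(lra)); pose proof (Hd y 1 ltac:(lra) ltac:(lra) ltac:(lra)); lra).
  split; [exact Hpos|].
  set (u := f y). assert (Heq: h (S m) y = h (S m) u) by (symmetry; apply He; lra).
  destruct (Req_dec y u) as [E|E].
  - pose proof (fixed_pt (S m) f y ltac:(lia) Hf Hy (eq_sym E)) as Fx.
    rewrite <- E. pose proof (G_bounds m y y ltac:(lra) ltac:(lra)) as [B1 B2].
    assert (G (S m) y y = INR (S m) * y^m) by lra. rewrite H.
    rewrite <- Rmult_assoc, (Rmult_comm (1-y)), Fx. reflexivity.
  - apply (Rmult_eq_reg_l (y - u)); [|lra].
    replace ((y - u) * ((1 - y) * G (S m) u y)) with ((1-y)*((y-u)*G (S m) u y)) by ring.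
    rewrite G_diff. unfold h in Heq. rewrite Nat.add_1_r in Heq. simpl in *. nra.
Qed.

Lemma T1_eq m f y : is_fk (S m) f -> 0 < y < 1 ->
  T f 1 y = / G (S m) 1 (y / f y).
Proof. intros Hf Hy. destruct (key m f y Hf Hy) as [Hu K].
  set (u := f y) in *.
  pose proof (G_hom (S m) 1 (y/u) u) as Hh.
  replace (u * 1) with u in Hh by ring. replace (u * (y/u)) with y in Hh by (field; lra).
  pose proof (G_ge1 m (y/u) ltac:(apply Rdiv_le_0_compat; lra)).
  assert (Hum: 0 < u ^ S m) by (apply pow_lt; lra).
  assert ((1 - y) * G (S m) 1 (y/u) = u).
  { apply (Rmult_eq_reg_l (u ^ S m)); [|lra].
    replace (u ^ S m * ((1 - y) * G (S m) 1 (y / u))) with ((1-y) * (u ^ S m * G (S m) 1 (y / u))) by ring.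
    rewrite <- Hh, <- Rmult_assoc, K. ring. }
  unfold T; fold u. set (Gv := G (S m) 1 (y / u)) in *. simpl.
  rewrite <- H0. field. split; lra. Qed.

Lemma Tk_eq m f y : is_fk (S m) f -> 0 < y < 1 ->
  T f (S m) y = / G (S m) (f y / y) 1.
Proof. intros Hf Hy. destruct (key m f y Hf Hy) as [Hu K].
  set (u := f y) in *.
  pose proof (G_hom (S m) (u/y) 1 y) as Hh.
  replace (y * 1) with y in Hh by ring. replace (y * (u/y)) with u in Hh by (field; lra).
  pose proof (G_ge1 m (u/y) ltac:(apply Rdiv_le_0_compat; lra)).
  assert (Hg: 1 <= G (S m) (u / y) 1).
  { change (G (S m) (u/y) 1) with (1^m + (u/y) * G m (u/y) 1). rewrite pow1.
    pose proof (G_nonneg m (u/y) 1 ltac:(apply Rdiv_le_0_compat; lra) ltac:(lra)).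
    assert (0 <= u/y) by (apply Rdiv_le_0_compat; lra).
    assert (0 <= (u/y) * G m (u/y) 1) by (apply Rmult_le_pos; lra). lra. }
  assert (Hum: 0 < u ^ S m) by (apply pow_lt; lra).
  assert (Hym: 0 < y ^ m) by (apply pow_lt; lra).
  assert ((1 - y) * y^m * G (S m) (u/y) 1 = u ^ S m).
  { apply (Rmult_eq_reg_l y); [|lra].
    replace (y * ((1 - y) * y ^ m * G (S m) (u / y) 1)) with ((1-y) * (y ^ S m * G (S m) (u / y) 1)) by (simpl; ring).
    rewrite <- Hh, <- K. ring. }
  unfold T; fold u. replace (S m - 1)%nat with m by lia.
  set (Gv := G (S m) (u / y) 1) in *. rewrite <- H0. field. split; lra. Qed.

Theorem mainTheorem8 (k : nat) (f : R -> R) :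
  (1 <= k)%nat -> is_fk k f ->
  (forall x y, 0 <= x -> x <= y -> y < 1 -> T f 1 y <= T f 1 x) /\
  (forall x y, 0 <= x -> x <= y -> y < 1 -> T f k x <= T f k y).
Proof.
  intros Hk Hf. destruct k as [|m]; [lia|].
  pose proof Hf as [Hr [Hd He]].
  assert (Hf0: f 0 = 1).
  { pose proof (He 0 ltac:(lra)). pose proof (Hr 1 ltac:(lra)).
    pose proof (Hd 0 1 ltac:(lra) ltac:(lra) ltac:(lra)).
    rewrite Nat.add_1_r, !pow_i in H by lia.
    change (f 0 ^ S (S m)) with (f 0 * f 0 ^ S m) in H.
    assert (0 < f 0 ^ S m) by (apply pow_lt; lra).
    assert (f 0 ^ S m * (1 - f 0) = 0) by lra.
    apply Rmult_integral in H3. lra. }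
  assert (T0: forall j, T f j 0 = 0 ^ (j - 1)).
  { intros j. unfold T. rewrite Hf0, pow1. field. }
  assert (Hpos: forall y, 0 <= y < 1 -> 0 < f y).
  { intros y Hy. pose proof (Hr 1 ltac:(lra)). pose proof (Hd y 1 ltac:(lra) ltac:(lra) ltac:(lra)). lra. }
  assert (Hfm: forall x y, 0 <= x -> x <= y -> y < 1 -> f y <= f x).
  { intros x y H1 H2 H3. destruct (Req_dec x y). subst; lra.
    left; apply Hd; lra. }
  split; intros x y Hx Hxy Hy.
  - destruct (Req_dec y 0). { subst; replace x with 0 by lra; lra. }
    rewrite (T1_eq m f y Hf ltac:(lra)).
    pose proof (G_ge1 m (y / f y) ltac:(apply Rdiv_le_0_compat; [lra|apply Hpos; lra])).
    destruct (Req_dec x 0).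
    + rewrite H1, T0. replace (1 - 1)%nat with 0%nat by lia. rewrite pow_O.
      assert (/ G (S m) 1 (y / f y) <= / 1) by (apply Rinv_le_contravar; lra).
      rewrite Rinv_1 in H2. lra.
    + rewrite (T1_eq m f x Hf ltac:(lra)).
      pose proof (G_ge1 m (x / f x) ltac:(apply Rdiv_le_0_compat; [lra|apply Hpos; lra])).
      assert (0 < f y) by (apply Hpos; lra). assert (f y <= f x) by (apply Hfm; lra).
      assert (0 < f x) by lra.
      apply Rinv_le_contravar; [lra|]. apply G_mono; try lra.
      apply Rdiv_le_0_compat; lra.
      unfold Rdiv. apply Rmult_le_compat; try lra.
      left; apply Rinv_0_lt_compat; lra.
      apply Rinv_le_contravar; lra.
  - destruct (Req_dec y 0). { subst; replace x with 0 by lra; lra. }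
    assert (0 < f y) by (apply Hpos; lra).
    rewrite (Tk_eq m f y Hf ltac:(lra)).
    assert (Gy: 1 <= G (S m) (f y / y) 1).
    { change (G (S m) (f y/y) 1) with (1^m + (f y/y) * G m (f y/y) 1). rewrite pow1.
      pose proof (G_nonneg m (f y/y) 1 ltac:(apply Rdiv_le_0_compat; lra) ltac:(lra)).
      assert (0 <= f y/y) by (apply Rdiv_le_0_compat; lra).
      assert (0 <= (f y/y) * G m (f y/y) 1) by (apply Rmult_le_pos; lra). lra. }
    destruct (Req_dec x 0).
    + subst. rewrite T0. replace (S m - 1)%nat with m by lia.
      destruct m.
      * rewrite pow_O. replace (G 1 (f y / y) 1) with 1 by (simpl; ring). rewrite Rinv_1. lra.
      * rewrite pow_i by lia. left; apply Rinv_0_lt_compat; lra.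
    + rewrite (Tk_eq m f x Hf ltac:(lra)).
      apply Rinv_le_contravar; [lra|]. apply G_mono; try lra.
      apply Rdiv_le_0_compat; lra.
      assert (f y <= f x) by (apply Hfm; lra).
      unfold Rdiv. apply Rmult_le_compat; try lra.
      left; apply Rinv_0_lt_compat; lra.
      apply Rinv_le_contravar; lra.
Qed.
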